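(* Let $p,q$ be positive integers, $e\in\mathbb{R}^p$ the vector of all ones, and let $(z,w)\in\mathbb{R}^p\times\mathbb{R}^q$ satisfy $z^+\not\ge\|w\|e$ and $\langle z^-,e\rangle<\|w\|$. Assume further that $0<\alpha<1$ and $\langle e,|z|\rangle<\alpha(1+\alpha)^{-1}\|w\|$. For $\lambda\ge0$ let $N(\lambda):=\operatorname{diag}\big(-\operatorname{sgn}([(\lambda+1)z-\|w\|e]^-)\big)$, and given $\lambda_0>0$ define $\{\lambda_k\}$ by $N_k:=N(\lambda_k)$ and $$\big[-\|w\|+\langle e,N_kz\rangle\big]\lambda_{k+1}=-\langle e,N_k[z-\|w\|e]\rangle,\qquad k=0,1,\ldots.$$ Then for any $\lambda_0>0$ the sequence $\{\lambda_k\}$ is well defined and converges linearly to the unique solution $\lambda_*$ of $\lambda\|w\|=\langle e,[(\lambda+1)z-\|w\|e]^-\rangle$, namely $$|\lambda_*-\lambda_{k+1}|\le\alpha|\lambda_*-\lambda_k|,\qquad k=0,1,\ldots.$$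
   Context: For $\alpha\in\mathbb{R}$, $\alpha^+:=\max(\alpha,0)$ and $\alpha^-:=\max(-\alpha,0)$; for vectors, $z^+$, $z^-$, $|z|$ and $\operatorname{sgn}(z)$ are taken componentwise (with $\operatorname{sgn}(0)=0$), and $\operatorname{diag}(z)$ is the diagonal matrix with diagonal $z_1,\dots,z_p$. The order $\ge$ is componentwise; $z^+\not\ge\|w\|e$ means that $z^+\ge\|w\|e$ fails. *)

(* Defs.v *)
(* Vectors of R^p are column vectors 'cV[R]_p over a
   real closed field R (the reals are an instance). *)
From HB Require Import structures.
From mathcomp Require Import all_boot all_order all_algebra.
Set Implicit Arguments. Unset Strict Implicit. Unset Printing Implicit Defensive.
Import Order.TTheory GRing.Theory Num.Theory.
Local Open Scope ring_scope.

Section Defs.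
Variable R : rcfType.

Definition posp (a : R) : R := Num.max a 0.
Definition negp (a : R) : R := Num.max (- a) 0.

Definition vpos n (z : 'cV[R]_n) : 'cV[R]_n := map_mx posp z.
Definition vneg n (z : 'cV[R]_n) : 'cV[R]_n := map_mx negp z.
Definition vabs n (z : 'cV[R]_n) : 'cV[R]_n := map_mx (fun a => `|a|) z.
Definition vsgn n (z : 'cV[R]_n) : 'cV[R]_n := map_mx (fun a => Num.sg a) z.

Definition onesv n : 'cV[R]_n := const_mx 1.

Definition diagv n (z : 'cV[R]_n) : 'M[R]_n := diag_mx z^T.

Definition dotv n (u v : 'cV[R]_n) : R := \sum_i u i 0 * v i 0.
Definition enorm n (w : 'cV[R]_n) : R := Num.sqrt (dotv w w).

Definition Nmat p q (z : 'cV[R]_p) (w : 'cV[R]_q) (l : R) : 'M[R]_p :=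
  diagv (- vsgn (vneg ((l + 1) *: z - enorm w *: onesv p))).

Definition lam_den p q (z : 'cV[R]_p) (w : 'cV[R]_q) (l : R) : R :=
  - enorm w + dotv (onesv p) (Nmat z w l *m z).

Definition lam_rhs p q (z : 'cV[R]_p) (w : 'cV[R]_q) (l : R) : R :=
  - dotv (onesv p) (Nmat z w l *m (z - enorm w *: onesv p)).

Fixpoint lam_seq p q (z : 'cV[R]_p) (w : 'cV[R]_q) (l0 : R) (k : nat) : R :=
  match k with
  | 0 => l0
  | k'.+1 => let l := lam_seq z w l0 k' in lam_rhs z w l / lam_den z w l
  end.

End Defs.

Arguments onesv {R} n.

(* Main.v *)
Require Import Defs.
From HB Require Import structures.
From mathcomp Require Import all_boot all_order all_algebra.
From mathcomp Require Import ring lra.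
Import Order.TTheory GRing.Theory Num.Theory.
Local Open Scope ring_scope.
Set Implicit Arguments. Unset Strict Implicit.

Section Aux.
Variables (R : rcfType) (p q : nat) (z : 'cV[R]_p) (w : 'cV[R]_q).
Local Notation W := (enorm w).
Definition aa (i : 'I_p) (l : R) : R := W - (l + 1) * z i 0.
Definition FF (l : R) : R := \sum_i Num.max (aa i l) 0.
Definition Sof (l : R) : {set 'I_p} := [set i | 0 < aa i l].
Definition GG (S : {set 'I_p}) (m : R) : R := \sum_(i in S) aa i m.
Definition DD (S : {set 'I_p}) : R := W + \sum_(i in S) z i 0.
Definition PP (S : {set 'I_p}) : R := (\sum_(i in S) (W - z i 0)) / DD S.
Definition cc : R := \sum_i `|z i 0|.

Lemma maxE0 (x : R) : Num.max x 0 = if x < 0 then 0 else x.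
Proof. by rewrite /Num.max. Qed.

Lemma sg_max (x : R) : Num.sg (Num.max x 0) = if 0 < x then 1 else 0.
Proof.
rewrite maxE0; case: (ltgtP x 0) => h.
- by rewrite sgr0.
- by rewrite gtr0_sg.
- by rewrite h sgr0.
Qed.

Lemma dotN l (x : 'cV[R]_p) :
  dotv (onesv p) (Nmat z w l *m x) = - \sum_(i in Sof l) x i 0.
Proof.
rewrite /dotv /Nmat /diagv mul_diag_mx (big_mkcond (fun i => i \in Sof l)) -sumrN.
apply: eq_bigr => i _.
rewrite !mxE /vneg /negp in_set.
have -> : - ((l + 1) * z i 0 - enorm w * 1) = aa i l.
  rewrite /aa; move: (z i 0) (enorm w) => a b; ring.
rewrite sg_max; case: (boolP (0 < aa i l)) => h; ring.
Qed.

Lemma dotF l :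
  dotv (onesv p) (vneg ((l + 1) *: z - enorm w *: onesv p)) = FF l.
Proof.
rewrite /dotv /FF; apply: eq_bigr => i _.
rewrite !mxE /negp mul1r.
have -> // : - ((l + 1) * z i 0 - enorm w * 1) = aa i l.
rewrite /aa; move: (z i 0) (enorm w) => a b; ring.
Qed.

Lemma dotabs : dotv (onesv p) (vabs z) = cc.
Proof. by rewrite /dotv /cc; apply: eq_bigr => i _; rewrite !mxE mul1r. Qed.

Lemma den_eq l : lam_den z w l = - DD (Sof l).
Proof. by rewrite /lam_den dotN /DD opprD. Qed.

Lemma rhs_eq l : lam_rhs z w l = - \sum_(i in Sof l) (W - z i 0).
Proof.
rewrite /lam_rhs dotN opprK -sumrN; apply: eq_bigr => i _.
by rewrite !mxE; ring.
Qed.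

Lemma seq_eq l0 k : lam_seq z w l0 k.+1 = PP (Sof (lam_seq z w l0 k)).
Proof. by rewrite /= den_eq rhs_eq /PP invrN mulrNN. Qed.

Lemma D_ge S : W - cc <= DD S.
Proof.
rewrite /DD lerD2l.
have h1 : `|\sum_(i in S) z i 0| <= cc.
  apply: le_trans (ler_norm_sum _ _ _) _.
  rewrite /cc (big_mkcond (fun i => i \in S)) /=.
  by apply: ler_sum => i _; case: ifP.
rewrite lerNl; apply: le_trans h1; rewrite -normrN; exact: ler_norm.
Qed.

Lemma term_bnd (x y : R) : `|(if 0 < x then y else 0) - Num.max y 0| <= `|x - y|.
Proof.
rewrite maxE0; case: (ltP 0 x) => hx; case: (ltP y 0) => hy.
- rewrite subr0 ltr0_norm // ger0_norm; lra.
- by rewrite subrr normr0.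
- by rewrite subrr normr0.
- rewrite sub0r normrN ger0_norm // ler0_norm; lra.
Qed.

Lemma G_bnd l m : `|GG (Sof l) m - FF m| <= cc * `|m - l|.
Proof.
rewrite /GG /FF (big_mkcond (fun i => i \in Sof l)) -sumrB /cc mulr_suml.
apply: le_trans (ler_norm_sum _ _ _) _.
apply: ler_sum => i _; rewrite in_set.
apply: le_trans (term_bnd _ _) _.
have -> : aa i l - aa i m = (m - l) * z i 0 by rewrite /aa; ring.
by rewrite normrM mulrC.
Qed.

Lemma key S m : 0 < DD S -> (PP S - m) * DD S = GG S m - m * W.
Proof.
move=> hD; rewrite mulrBl /PP mulfVK ?gt_eqF //.
rewrite /GG /DD /aa mulrDr.
have -> : \sum_(i in S) (W - (m + 1) * z i 0) = \sum_(i in S) (W - z i 0) - m * \sum_(i in S) z i 0.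
  rewrite mulr_sumr -sumrB; apply: eq_bigr => i _; ring.
ring.
Qed.

End Aux.

Theorem proposition4 (R : rcfType) (p q : nat) (z : 'cV[R]_p) (w : 'cV[R]_q)
  (alpha : R) :
  (0 < p)%N -> (0 < q)%N ->
  ~ (forall i, enorm w <= vpos z i 0) ->
  dotv (vneg z) (onesv p) < enorm w ->
  0 < alpha -> alpha < 1 ->
  dotv (onesv p) (vabs z) < alpha / (1 + alpha) * enorm w ->
  forall l0 : R, 0 < l0 ->
    (* well defined: the coefficient of lambda_{k+1} never vanishes *)
    (forall k, lam_den z w (lam_seq z w l0 k) != 0) /\
    exists lstar : R,
      lstar * enorm w = dotv (onesv p) (vneg ((lstar + 1) *: z - enorm w *: onesv p)) /\
      (forall l : R,
         l * enorm w = dotv (onesv p) (vneg ((l + 1) *: z - enorm w *: onesv p)) ->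
         l = lstar) /\
      (forall k, `|lstar - lam_seq z w l0 k.+1| <= alpha * `|lstar - lam_seq z w l0 k|).
Proof.
move=> _ _ _ _ ha0 ha1 hc l0 _.
rewrite dotabs in hc.
have c0 : 0 <= cc z by apply: sumr_ge0 => i _.
have ha1' : 0 < 1 + alpha by lra.
move: hc; rewrite mulrAC ltr_pdivlMr // => hc.
set W := enorm w in hc *.
set c := cc z in c0 hc *.
have hcl : c < alpha * (W - c) by lra.
have hWc : 0 < W - c.
  have : 0 < alpha * (W - c) by lra.
  by rewrite pmulr_rgt0.
have hD S : 0 < DD z w S := lt_le_trans hWc (D_ge z w S).
have con S m t : 0 <= t -> `|GG z w S m - m * W| <= c * t ->
    `|PP z w S - m| <= alpha * t.
  move=> ht hG.
  have e := key m (hD S).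
  have h1 : c * t <= alpha * (W - c) * t by apply: ler_wpM2r => //; exact: ltW.
  have h2 : alpha * (W - c) * t <= alpha * t * DD z w S.
    rewrite mulrAC; apply: ler_wpM2l; first by rewrite mulr_ge0 // ltW.
    exact: D_ge.
  rewrite -(ler_pM2r (hD S)) -(gtr0_norm (hD S)) -normrM e.
  rewrite (gtr0_norm (hD S)).
  exact: le_trans hG (le_trans h1 h2).
have GF l : GG z w (Sof z w l) l = FF z w l.
  have := G_bnd z w l l; rewrite subrr normr0 mulr0 normr_le0 subr_eq0.
  by move/eqP.
have fixW S m : PP z w S = m -> m * W = GG z w S m.
  move=> hm; have := key m (hD S); rewrite hm subrr mul0r.
  by move/eqP; rewrite eq_sym subr_eq0 => /eqP.
pose d S := `|PP z w (Sof z w (PP z w S)) - PP z w S|.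
have [S0 hmin] : exists S0, forall S, d S0 <= d S.
  case: (@arg_minP _ R _ set0 predT d isT) => S0 _ h.
  by exists S0 => S; exact: h.
set mu := PP z w S0.
set nu := PP z w (Sof z w mu).
have step : d (Sof z w mu) <= alpha * d S0.
  rewrite /d -/nu.
  apply: con; first exact: normr_ge0.
  rewrite GF (fixW _ _ (erefl nu)) distrC.
  exact: G_bnd.
have d0 : d S0 = 0.
  have := hmin (Sof z w mu); have := normr_ge0 (nu - mu).
  rewrite /d -/mu -/nu in step *.
  move=> h0 h1; apply/eqP; rewrite eq_le normr_ge0 andbT.
  nra.
have fp : PP z w (Sof z w mu) = mu.
  by move: d0; rewrite /d -/mu => /eqP; rewrite normr_eq0 subr_eq0 => /eqP.
have root : mu * W = FF z w mu by rewrite -GF; exact: fixW.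
split.
  by move=> k; rewrite den_eq oppr_eq0 gt_eqF.
exists mu; split; first by rewrite dotF.
split.
  move=> l; rewrite dotF => hl.
  have h : `|PP z w (Sof z w mu) - l| <= alpha * `|l - mu|.
    apply: con; first exact: normr_ge0.
    by rewrite hl; exact: G_bnd.
  rewrite fp distrC in h.
  have h0 := normr_ge0 (l - mu).
  apply/eqP; rewrite -subr_eq0 -normr_eq0 eq_le normr_ge0 andbT; nra.
move=> k; rewrite seq_eq distrC.
apply: con; first exact: normr_ge0.
rewrite root; exact: G_bnd.
Qed.
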